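(* Let $n,t\in\mathbb N$. If $\mathcal H$ is an $n$-vertex intersecting hypergraph with codegree at most $t$ and no edge of size one, then $e(\mathcal H)\leq t\max_{v\in V(\mathcal H)}|N[v]|$. Moreover, if equality holds, then there exists $v\in V(\mathcal H)$ such that $e(\mathcal H)=t|N[v]|$, $d(x)=0$ for every $x\in V(\mathcal H)\setminus N[v]$, and $\mathcal H[N[v]]$ is either a $t$-fold projective plane of order $k$ for some $k\in\mathbb N$ (so that $|N[v]|=k^2+k+1$), or a $t$-fold near-pencil.
   Context: A hypergraph $\mathcal H$ consists of a finite vertex set $V(\mathcal H)$ and a finite set of edges, each edge $e$ equipped with a nonempty set $V(e)\subseteq V(\mathcal H)$; multiple edges with the same vertex set are allowed. The size of $e$ is $|V(e)|$, and $e(\mathcal H)$ is the number of edges. $d(x)$ is the number of edges containing $x$. The codegree of distinct vertices $u,v$ is the number of edges containing both; the codegree of $\mathcal H$ is the maximum of these. $\mathcal H$ is intersecting if $V(e)\cap V(f)\neq\emptyset$ for all edges $e,f$, and linear if its codegree is at most one. For $v\in V(\mathcal H)$, $N[v]=\bigcup_{e\in\mathcal H: v\in V(e)}V(e)$. For $S\subseteq V(\mathcal H)$, $\mathcal H[S]$ is the hypergraph with vertex set $S$ and edge set $\{e\in\mathcal H: V(e)\subseteq S\}$. A projective plane of order $k$ is a linear intersecting hypergraph with $k^2+k+1$ vertices in which every edge has size $k+1$ and every vertex lies in exactly $k+1$ edges. A near-pencil on $m$ vertices is a hypergraph isomorphic to the one with vertex set $\{v,v_1,\dots,v_{m-1}\}$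 and edges $e,e_1,\dots,e_{m-1}$ where $V(e)=\{v_1,\dots,v_{m-1}\}$ and $V(e_i)=\{v,v_i\}$. A $t$-fold $\mathcal H$ is obtained from $\mathcal H$ by replacing each edge with $t$ distinct edges having the same vertex set. *)

(* Defs.v *)
From mathcomp Require Import all_boot.
Set Implicit Arguments. Unset Strict Implicit. Unset Printing Implicit Defensive.

(* A hypergraph is given by a finite vertex type V, a finite edge type E
   (so multiple edges with the same vertex set are allowed) and a map
   edge : E -> {set V} giving V(e). *)

Section Hyper.
Variables (V E : finType) (edge : E -> {set V}).

Definition hg_wf : Prop := forall e : E, edge e != set0.

Definition hdeg (x : V) : nat := #|[set e : E | x \in edge e]|.

Definition hcodeg (u v : V) : nat := #|[set e : E | (u \in edge e) && (v \in edge e)]|.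

Definition codegree_le (t : nat) : Prop :=
  forall u v : V, u != v -> hcodeg u v <= t.

Definition intersecting : Prop :=
  forall e f : E, edge e :&: edge f != set0.

Definition linear : Prop := codegree_le 1.

Definition nbhd (v : V) : {set V} := \bigcup_(e | v \in edge e) edge e.

Definition projective_plane (k : nat) : Prop :=
  [/\ hg_wf, linear, intersecting, #|V| = k ^ 2 + k + 1 &
      ((forall e : E, #|edge e| = k.+1) /\ (forall x : V, hdeg x = k.+1))].
End Hyper.

(* The near-pencil on m = k.+1 vertices: vertex set option 'I_k (None = v,
   Some i = v_(i+1)), edges e = None with V(e) = {v_1..v_k} and
   e_i = Some i with V(e_i) = {v, v_i}. *)
Definition near_pencil_edge (k : nat) (e : option 'I_k) : {set option 'I_k} :=
  match e with
  | None => [set Some i | i : 'I_k]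
  | Some i => [set None; Some i]
  end.

(* [is_tfold_of t S P edge gedge]: the induced hypergraph H[S], whose vertex
   set is S and whose edges are the e : E with V(e) \subset S (these are the
   e with [P e]), is isomorphic to the t-fold of the hypergraph (W, F, gedge):
   there is a bijection phi from W onto S and a map psi from the edges of
   H[S] onto the edges of G such that every edge of G has exactly t
   preimages, each having the image under phi of its vertex set. *)
Definition is_tfold_of (V E : finType) (edge : E -> {set V}) (S : {set V})
    (t : nat) (W F : finType) (gedge : F -> {set W}) : Prop :=
  exists (phi : W -> V) (psi : E -> F),
    [/\ injective phi, phi @: [set: W] = S,
        (forall e : E, edge e \subset S -> phi @: gedge (psi e) = edge e)
      & (forall f : F, #|[set e : E | (edge e \subset S) && (psi e == f)]| = t)].

Definition is_tfold_projective_plane (V E : finType) (edge : E -> {set V})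
    (S : {set V}) (t : nat) : Prop :=
  exists (k : nat) (W F : finType) (gedge : F -> {set W}),
    projective_plane gedge k /\ is_tfold_of edge S t gedge.

Definition is_tfold_near_pencil (V E : finType) (edge : E -> {set V})
    (S : {set V}) (t : nat) : Prop :=
  exists k : nat, is_tfold_of edge S t (@near_pencil_edge k).

(* Main.v *)
Require Import Defs.
From mathcomp Require Import all_boot all_order all_algebra.
From mathcomp Require Import zify ring lra.
Import Order.TTheory GRing.Theory Num.Theory.
Set Implicit Arguments. Unset Strict Implicit. Unset Printing Implicit Defensive.

Lemma card_sum (T : finType) (B : {set T}) : #|B| = \sum_y (y \in B : nat).
Proof. rewrite -sum1_card big_mkcond; apply: eq_bigr => y _; by case: (y \in B). Qed.

Lemma card_setE (T : finType) (P : pred T) : #|[set x | P x]| = \sum_x (P x : nat).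
Proof. rewrite card_sum; apply: eq_bigr => x _; by rewrite inE. Qed.

Lemma key_le r T k s t p q : r <= t * s -> s <= k -> T <= k * p -> t * (k + p) <= r + q -> r * T <= k * s * q.
Proof.
move=> h1 h2 h3 h4.
have h5 : t * p <= q by nia.
have : r * T <= r * (k * p) by apply: leq_mul.
have : r * p <= s * q.
  apply: (leq_trans (leq_mul h1 (leqnn p))). rewrite -mulnA mulnC. nia.
nia.
Qed.
Lemma key_lt r T k s t p q : 0 < r -> 0 < k -> r <= t * s -> s <= k -> T <= k * p -> t * (k + p) < r + q -> r * T < k * s * q.
Proof.
move=> h0 h0' h1 h2 h3 h4.
have h5 : t * p < q by nia.
have hs : 0 < s by nia.
have e1 : r * T <= r * (k * p) by apply: leq_mul.
have e2 : r * p <= t * s * p by apply: leq_mul.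
have e3 : s * (t * p) < s * q by rewrite ltn_pmul2l.
have e4 : r * p < s * q by nia.
have e5 : k * (r * p) < k * (s * q) by rewrite ltn_pmul2l.
nia.
Qed.
Lemma key_eq r T k s t p q : 0 < r -> 0 < k -> s <= T -> r <= t * s -> s <= k -> T <= k * p -> t * (k + p) = r + q -> r * T = k * s * q -> r = t * k /\ s = k.
Proof.
move=> h0 h0' hT h1 h2 h3 h4 h6.
have h5 : t * p <= q by nia.
have hs : 0 < s by nia.
have e1 : r * T <= r * (k * p) by apply: leq_mul.
have e2 : r * p <= t * s * p by apply: leq_mul.
have e3 : k * (r * p) <= k * (t * s * p) by apply: leq_mul.
have e4 : k * s * (t * p) <= k * s * q by apply: leq_mul.
have e6 : k * s * (t * p) = k * s * q by nia.
have e7 : t * p = q by move/eqP: e6; rewrite eqn_pmul2l ?muln_gt0 ?h0' ?hs // => /eqP.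
have hp : 0 < p by nia.
have e8 : r * p = t * s * p by nia.
have e9 : r = t * s by move/eqP: e8; rewrite eqn_pmul2r // => /eqP.
have e10: r = t * k by nia.
split => //.
have ht : 0 < t by nia.
by apply/eqP; rewrite -(eqn_pmul2l ht) -e9 -e10.
Qed.

Local Open Scope ring_scope.
Lemma ratdiv_le (a bb c d : nat) : (0 < bb)%N -> (0 < d)%N ->
  ((a%:R / bb%:R : rat) <= c%:R / d%:R)%R = (a * d <= c * bb)%N.
Proof.
move=> hb hd; rewrite ler_pdivrMr ?ltr0n // mulrAC ler_pdivlMr ?ltr0n //.
by rewrite -!natrM ler_nat.
Qed.

Lemma ratdiv_lt (a bb c d : nat) : (0 < bb)%N -> (0 < d)%N ->
  ((a%:R / bb%:R : rat) < c%:R / d%:R)%R = (a * d < c * bb)%N.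
Proof.
move=> hb hd; rewrite ltr_pdivrMr ?ltr0n // mulrAC ltr_pdivlMr ?ltr0n //.
by rewrite -!natrM ltr_nat.
Qed.

Lemma ratdiv_eq (a bb c d : nat) : (0 < bb)%N -> (0 < d)%N ->
  ((a%:R / bb%:R : rat) == c%:R / d%:R) = (a * d == c * bb)%N.
Proof.
move=> hb hd; rewrite eqr_div ?pnatr_eq0 -?lt0n //.
by rewrite -!natrM eqr_nat.
Qed.

Lemma sum_lt_one (I : finType) (F G : I -> rat) i0 :
  (forall i, (F i <= G i)%R) -> (F i0 < G i0)%R -> (\sum_i F i < \sum_i G i)%R.
Proof.
move=> H H0; rewrite (bigD1 i0) // [X in (_ < X)%R](bigD1 i0) //=.
apply: ltr_leD => //; apply: ler_sum => i _; exact: H.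
Qed.

Local Close Scope ring_scope.
Section Hyp.
Variables (V E : finType) (edge : E -> {set V}) (t : nat).
Hypothesis wf : hg_wf edge.
Hypothesis inter : intersecting edge.
Hypothesis cod : codegree_le edge t.
Hypothesis no1 : forall e : E, #|edge e| != 1.

Local Notation r := (hdeg edge).
Local Notation N := (nbhd edge).
Local Notation cd := (hcodeg edge).

Lemma inN x y : (y \in N x) = [exists e, (x \in edge e) && (y \in edge e)].
Proof.
apply/bigcupP/existsP => [[e He Hy]|[e /andP[He Hy]]]; exists e => //; exact/andP.
Qed.

Lemma inN_sym x y : (y \in N x) = (x \in N y).
Proof. by rewrite !inN; apply/existsP/existsP => -[e /andP[a c]]; exists e; rewrite a c. Qed.

Lemma edge_subN x e : x \in edge e -> edge e \subset N x.
Proof. move=> He; apply/subsetP => y Hy; rewrite inN; apply/existsP; exists e; by rewrite He Hy. Qed.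

Lemma edge_size e : 1 < #|edge e|.
Proof. have := wf e; rewrite -card_gt0 => H; have := no1 e; by case: #|edge e| H => [|[|]]. Qed.

Lemma cd_sym x y : cd x y = cd y x.
Proof. by rewrite /hcodeg; apply: eq_card => e; rewrite !inE andbC. Qed.

Lemma cd_le x y : x != y -> cd x y <= t.
Proof. exact: cod. Qed.

Lemma cd0 x y : y \notin N x -> cd x y = 0.
Proof.
rewrite inN negb_exists => /forallP H; apply/eqP; rewrite cards_eq0; apply/eqP/setP => e.
by rewrite !inE (negbTE (H e)).
Qed.

Lemma sum_cd x (A : {set V}) :
  \sum_(y in A) cd x y = \sum_(g | x \in edge g) #|edge g :&: A|.
Proof.
rewrite (eq_bigr (fun y => \sum_g ((x \in edge g) && (y \in edge g)) : nat)); last first.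
  by move=> y _; rewrite /hcodeg card_setE.
rewrite exchange_big /= [RHS]big_mkcond /=; apply: eq_bigr => g _.
case: (x \in edge g) => /=; last by rewrite big1.
rewrite card_sum big_mkcond /=; apply: eq_bigr => y _; rewrite inE.
by case: (y \in A); case: (y \in edge g).
Qed.

Lemma hdeg_sum x : r x = \sum_(g | x \in edge g) 1.
Proof. by rewrite /hdeg sum1_card; apply: eq_card => g; rewrite inE. Qed.

Lemma double_count : \sum_x r x = \sum_e #|edge e|.
Proof.
rewrite (eq_bigr (fun x => \sum_e (x \in edge e : nat))); last by move=> x _; rewrite /hdeg card_setE.
rewrite exchange_big; apply: eq_bigr => e _; by rewrite card_sum.
Qed.


Definition mm := \max_(v : V) #|N v|.
Lemma N_le_mm x : #|N x| <= mm.
Proof. rewrite /mm; exact: (@leq_bigmax _ (fun v => #|N v|)). Qed.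

Lemma meet_bound x e : r x <= \sum_(y in edge e) cd x y.
Proof.
rewrite sum_cd hdeg_sum; apply: leq_sum => g _.
by rewrite card_gt0 inter.
Qed.

Lemma sum_cd_le x e : x \notin edge e ->
  \sum_(y in edge e) cd x y <= t * #|edge e :&: N x|.
Proof.
move=> xe.
have -> : #|edge e :&: N x| = \sum_(y in edge e) (y \in N x : nat).
  rewrite card_sum [RHS]big_mkcond /=; apply: eq_bigr => y _; rewrite inE.
  by case: (y \in edge e).
rewrite big_distrr /=; apply: leq_sum => y ye.
case yN: (y \in N x); last by rewrite cd0 ?yN.
rewrite muln1; apply: cd_le; apply: contraNneq xe => ->; exact: ye.
Qed.

Definition T e := \sum_(x | x \notin edge e) #|edge e :&: N x|.

Lemma T_bound e : T e <= #|edge e| * (mm - #|edge e|).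
Proof.
rewrite /T (eq_bigr (fun x => \sum_(y in edge e) (y \in N x : nat))); last first.
  move=> x _; rewrite card_sum [RHS]big_mkcond /=; apply: eq_bigr => y _; rewrite inE.
  by case: (y \in edge e).
rewrite exchange_big /= -sum_nat_const; apply: leq_sum => y ye.
have -> : \sum_(x | x \notin edge e) (y \in N x : nat) = #|N y :\: edge e|.
  rewrite card_sum big_mkcond /=; apply: eq_bigr => x _; rewrite !inE inN_sym.
  by case: (x \in edge e); case: (x \in N y).
rewrite cardsD (setIidPr (edge_subN ye)); apply: leq_sub2r; exact: N_le_mm.
Qed.

Lemma k_le_mm e : #|edge e| <= mm.
Proof.
have := wf e; case/set0Pn => y ye.
apply: leq_trans (N_le_mm y); apply: subset_leq_card; exact: edge_subN.
Qed.


Lemma r_le_b x : r x <= #|E|.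
Proof. exact: max_card. Qed.

Lemma card_notin x : #|[set e | x \notin edge e]| = #|E| - r x.
Proof.
have := cardsC [set e | x \in edge e]; rewrite /hdeg => <-.
rewrite addKn; apply: eq_card => e; by rewrite !inE.
Qed.

Lemma T_ge_s x e : x \notin edge e -> #|edge e :&: N x| <= T e.
Proof. move=> xe; by rewrite /T (bigD1 x) //= leq_addr. Qed.

Lemma r_le_ts x e : x \notin edge e -> r x <= t * #|edge e :&: N x|.
Proof. move=> xe; exact: leq_trans (meet_bound x e) (sum_cd_le xe). Qed.

Lemma s_le_k x e : #|edge e :&: N x| <= #|edge e|.
Proof. apply: subset_leq_card; exact: subsetIl. Qed.

Definition alpha x e : rat :=
  if x \in edge e then 0%R else ((r x)%:R / (#|E| - r x)%:R)%R.
Definition beta x e : rat :=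
  if x \in edge e then 0%R else ((#|edge e| * #|edge e :&: N x|)%:R / (T e)%:R)%R.

Lemma beta_ge0 x e : (0 <= beta x e)%R.
Proof. rewrite /beta; case: (x \in edge e) => //; by rewrite divr_ge0 ?ler0n. Qed.

Lemma pw_facts x e : x \notin edge e -> 0 < r x ->
  [/\ 0 < #|edge e :&: N x|, 0 < T e, #|edge e| <= mm & 0 < #|edge e|].
Proof.
move=> xe r0.
have h1 := r_le_ts xe.
have s0 : 0 < #|edge e :&: N x| by move: h1; case: #|_| => //; rewrite muln0 leqn0 => /eqP h; rewrite h in r0.
split => //; first exact: leq_trans s0 (T_ge_s xe).
  exact: k_le_mm.
exact: ltnW (edge_size e).
Qed.

Lemma pw_le x e : t * mm <= #|E| -> r x < #|E| -> (alpha x e <= beta x e)%R.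
Proof.
move=> hb hr; rewrite /alpha /beta; case xe: (x \in edge e) => //.
move/negbT: xe => xe.
case: (posnP (r x)) => [->|r0]; first by rewrite mul0r divr_ge0 ?ler0n.
have [s0 T0 km k0] := pw_facts xe r0.
rewrite ratdiv_le ?subn_gt0 //.
apply: (key_le (t := t) (p := mm - #|edge e|)).
- exact: r_le_ts.
- exact: s_le_k.
- exact: T_bound.
- by rewrite subnKC // subnKC // ltnW.
Qed.

Lemma pw_lt x e : t * mm < #|E| -> x \notin edge e -> 0 < r x -> r x < #|E| ->
  (alpha x e < beta x e)%R.
Proof.
move=> hb xe r0 hr; rewrite /alpha /beta (negbTE xe).
have [s0 T0 km k0] := pw_facts xe r0.
rewrite ratdiv_lt ?subn_gt0 //.
apply: (key_lt (t := t) (p := mm - #|edge e|)) => //.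
- exact: r_le_ts.
- exact: s_le_k.
- exact: T_bound.
- by rewrite subnKC // subnKC // ltnW.
Qed.

Lemma pw_eq x e : t * mm = #|E| -> x \notin edge e -> 0 < r x -> r x < #|E| ->
  alpha x e = beta x e -> r x = t * #|edge e| /\ #|edge e :&: N x| = #|edge e|.
Proof.
move=> hb xe r0 hr; rewrite /alpha /beta (negbTE xe) => /eqP.
have [s0 T0 km k0] := pw_facts xe r0.
rewrite ratdiv_eq ?subn_gt0 // => /eqP h.
apply: (key_eq (T := T e) (p := mm - #|edge e|) (q := #|E| - r x)) => //.
- exact: T_ge_s.
- exact: r_le_ts.
- exact: s_le_k.
- exact: T_bound.
- by rewrite subnKC // subnKC // ltnW.
Qed.

Lemma sumA : (forall x, r x < #|E|) ->
  (\sum_x \sum_e alpha x e)%R = ((\sum_x r x)%:R : rat).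
Proof.
move=> hr; rewrite natr_sum; apply: eq_bigr => x _.
have -> : (\sum_e alpha x e)%R =
   (\sum_(e in [set e | x \notin edge e]) ((r x)%:R / (#|E| - r x)%:R : rat))%R.
  rewrite [RHS]big_mkcond; apply: eq_bigr => e _; rewrite /alpha inE.
  by case: (x \in edge e).
rewrite sumr_const card_notin -[(_ *+ (_ - _))%R]mulr_natr divfK // pnatr_eq0 -lt0n subn_gt0; exact: hr.
Qed.

Lemma sumB : (\sum_x \sum_e beta x e <= ((\sum_e #|edge e|)%:R : rat))%R.
Proof.
rewrite exchange_big natr_sum; apply: ler_sum => e _.
have -> : (\sum_x beta x e)%R =
   ((\sum_(x | x \notin edge e) (#|edge e| * #|edge e :&: N x|))%:R / (T e)%:R : rat)%R.
  rewrite natr_sum mulr_suml [RHS]big_mkcond; apply: eq_bigr => x _; rewrite /beta.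
  by case: (x \in edge e); rewrite ?mul0r.
rewrite -big_distrr /= -/(T e).
case: (posnP (T e)) => [->|T0]; first by rewrite invr0 mulr0 ler0n.
by rewrite natrM mulfK // pnatr_eq0 -lt0n.
Qed.

Lemma noStrict : t * mm <= #|E| -> (forall x, r x < #|E|) ->
  forall x0 e0, ~ (alpha x0 e0 < beta x0 e0)%R.
Proof.
move=> hb hr x0 e0 hlt.
have : (\sum_x \sum_e alpha x e < \sum_x \sum_e beta x e)%R.
  apply: (@sum_lt_one V (fun x => \sum_e alpha x e)%R (fun x => \sum_e beta x e)%R x0).
    move=> x; apply: ler_sum => e _; exact: pw_le.
  apply: (@sum_lt_one E (fun e => alpha x0 e) (fun e => beta x0 e) e0) => // e; exact: pw_le.
rewrite sumA // double_count => /lt_le_trans/(_ sumB).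
by rewrite ltxx.
Qed.


Lemma sum_cd_leA x (A : {set V}) : x \notin A ->
  \sum_(y in A) cd x y <= t * #|A :&: N x|.
Proof.
move=> xA.
have -> : #|A :&: N x| = \sum_(y in A) (y \in N x : nat).
  rewrite card_sum [RHS]big_mkcond /=; apply: eq_bigr => y _; rewrite inE.
  by case: (y \in A).
rewrite big_distrr /=; apply: leq_sum => y yA.
case yN: (y \in N x); last by rewrite cd0 ?yN.
rewrite muln1; apply: cd_le; apply: contraNneq xA => ->; exact: yA.
Qed.

Lemma x_inN x : 0 < r x -> x \in N x.
Proof.
rewrite /hdeg card_gt0 => /set0Pn [g]; rewrite inE => xg.
by rewrite inN; apply/existsP; exists g; rewrite xg.
Qed.

Lemma sum_deg_minus x : \sum_(y in [set~ x]) cd x y = \sum_(g | x \in edge g) (#|edge g| - 1).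
Proof.
rewrite sum_cd; apply: eq_bigr => g xg.
have := cardsD1 x (edge g); rewrite xg add1n => ->.
by rewrite subn1 /= setDE.
Qed.

Lemma star_case x : r x = #|E| -> 0 < #|E| -> #|E| < t * mm.
Proof.
move=> hx b0.
have r0 : 0 < r x by rewrite hx.
have h1 : r x <= t * (#|N x| - 1).
  rewrite hdeg_sum.
  apply: (@leq_trans (\sum_(g | x \in edge g) (#|edge g| - 1))).
    apply: leq_sum => g _; rewrite subn_gt0; exact: edge_size.
  rewrite -sum_deg_minus.
  have xA : x \notin [set~ x] by rewrite !inE eqxx.
  apply: (leq_trans (sum_cd_leA xA)).
  rewrite leq_mul2l; apply/orP; right.
  have := cardsD1 x (N x); rewrite x_inN // add1n => ->.
  by rewrite subn1 /= setDE setIC.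
have t0 : 0 < t.
  case: (posnP t) => // t0'; move: h1; rewrite t0' mul0n leqn0 => /eqP h; by rewrite h in r0.
have m0 : 0 < mm by apply: leq_trans (N_le_mm x); rewrite card_gt0; apply/set0Pn; exists x; exact: x_inN.
rewrite -hx; apply: leq_ltn_trans h1 _.
rewrite ltn_mul2l t0 /=; apply: leq_ltn_trans (leq_sub2r 1 (N_le_mm x)) _.
by rewrite subn1 prednK.
Qed.

Lemma exists_pair : 0 < #|E| -> (forall x, r x < #|E|) ->
  exists x e, [/\ x \notin edge e, 0 < r x & r x < #|E|].
Proof.
move=> /card_gt0P [e0 _] hr.
case/set0Pn: (wf e0) => x0 x0e.
have r0 : 0 < r x0 by rewrite /hdeg card_gt0; apply/set0Pn; exists e0; rewrite inE.
have : 0 < #|[set e | x0 \notin edge e]| by rewrite card_notin subn_gt0.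
case/card_gt0P => e1; rewrite inE => x0e1.
by exists x0, e1.
Qed.

Lemma part1 : #|E| <= t * mm.
Proof.
case: (posnP #|E|) => [->//|b0].
case: (boolP [exists x, r x == #|E|]) => [/existsP [x /eqP hx]|].
  exact: ltnW (star_case hx b0).
rewrite negb_exists => /forallP hr'.
have hr : forall x, r x < #|E| by move=> x; rewrite ltn_neqAle hr' r_le_b.
rewrite leqNgt; apply/negP => hlt.
have [x [e [xe r0 rb]]] := exists_pair b0 hr.
exact: (noStrict (ltnW hlt) hr (pw_lt hlt xe r0 rb)).
Qed.

Lemma eq_facts : t * mm = #|E| -> 0 < #|E| ->
  [/\ (forall x, r x < #|E|), 0 < t &
      (forall x e, 0 < r x -> x \notin edge e ->
         r x = t * #|edge e| /\ edge e \subset N x)].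
Proof.
move=> hb b0.
have hr : forall x, r x < #|E|.
  move=> x; rewrite ltn_neqAle r_le_b andbT; apply/eqP => hx.
  by have := star_case hx b0; rewrite hb ltnn.
split => //; first by move: b0; rewrite -hb; case: t.
move=> x e r0 xe.
have hab : alpha x e = beta x e.
  have := pw_le e (eq_leq hb) (hr x); rewrite le_eqVlt => /orP [/eqP //|].
  by move=> h; case: (noStrict (eq_leq hb) hr h).
have [h1 h2] := pw_eq hb xe r0 (hr x) hab.
split => //.
apply/setIidPl/eqP; rewrite eqEcard subsetIl h2 leqnn //.
Qed.


Section Str.
Hypothesis hr : forall x, r x < #|E|.
Hypothesis t0 : 0 < t.
Hypothesis EF : forall x e, 0 < r x -> x \notin edge e ->
  r x = t * #|edge e| /\ edge e \subset N x.
Variable v : V.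
Hypothesis rv : 0 < r v.

Lemma r_pos x e : x \in edge e -> 0 < r x.
Proof. move=> xe; rewrite /hdeg card_gt0; apply/set0Pn; exists e; by rewrite inE. Qed.

Lemma S1 x e g : x \notin edge e -> x \in edge g -> #|edge g :&: edge e| = 1.
Proof.
move=> xe xg.
have r0 := r_pos xg.
have [h1 _] := EF r0 xe.
have H : \sum_(g' | x \in edge g') #|edge g' :&: edge e| <= \sum_(g' | x \in edge g') 1.
  rewrite -sum_cd -hdeg_sum h1.
  apply: leq_trans (sum_cd_le xe) _; rewrite leq_mul2l s_le_k orbT //.
have H2 : \sum_(g' | (x \in edge g') && (g' != g)) 1 <=
          \sum_(g' | (x \in edge g') && (g' != g)) #|edge g' :&: edge e|.
  apply: leq_sum => g' _; by rewrite card_gt0 inter.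
rewrite (bigD1 g) // [X in _ <= X](bigD1 g) //= in H.
apply/eqP; rewrite eqn_leq; apply/andP; split; last by rewrite card_gt0 inter.
move: H H2; set a := \sum_(_ | _) 1; set c := \sum_(_ | _) _; lia.
Qed.

Lemma S1cd x e y : 0 < r x -> x \notin edge e -> y \in edge e -> cd x y = t.
Proof.
move=> r0 xe ye.
have [e1 _] := EF r0 xe.
have Hs : \sum_(y' in edge e) cd x y' = t * #|edge e|.
  rewrite sum_cd -e1 hdeg_sum; apply: eq_bigr => g xg; exact: S1 xe xg.
have Hc : forall y', y' \in edge e -> cd x y' <= t.
  move=> y' y'e; apply: cd_le; apply: contraNneq xe => ->; exact: y'e.
apply/eqP; rewrite eqn_leq Hc //=.
have Ht : \sum_(y' in edge e) t = t * #|edge e| by rewrite sum_nat_const mulnC.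
have Hle : \sum_(y' in edge e | y' != y) cd x y' <= \sum_(y' in edge e | y' != y) t.
  apply: leq_sum => y' /andP[h _]; exact: Hc.
rewrite (bigD1 y) //= in Hs; rewrite (bigD1 y) //= in Ht.
lia.
Qed.

Lemma S_in e : edge e \subset N v.
Proof.
case: (boolP (v \in edge e)) => ve; first exact: edge_subN.
by have [_ ->] := EF rv ve.
Qed.

Lemma S_pos y : y \in N v -> 0 < r y.
Proof. rewrite inN => /existsP [e /andP [_ ye]]; exact: r_pos ye. Qed.

Lemma S_out x : x \notin N v -> r x = 0.
Proof.
move=> xN; apply/eqP; rewrite /hdeg cards_eq0; apply/eqP/setP => e; rewrite !inE.
apply/negP => xe; move/subsetP: (S_in e) => /(_ x xe); by rewrite (negbTE xN).
Qed.

Lemma S_Nm : #|N v| = mm.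
Proof.
apply/eqP; rewrite eqn_leq N_le_mm /=.
rewrite /mm; apply/bigmax_leqP => x _; apply: subset_leq_card.
apply/subsetP => y; rewrite inN => /existsP [e /andP [_ ye]].
by move/subsetP: (S_in e) => /(_ y ye).
Qed.

Lemma edge_notin y : exists e, y \notin edge e.
Proof.
have : 0 < #|[set e | y \notin edge e]| by rewrite card_notin subn_gt0.
by case/card_gt0P => e; rewrite inE => h; exists e.
Qed.

Lemma S_cd_t y z : y \in N v -> z \in N v -> y != z -> cd y z = t.
Proof.
move=> yN zN yz.
case: (boolP [exists e, (z \in edge e) && (y \notin edge e)]).
  case/existsP => e /andP [ze ye]; exact: S1cd (S_pos yN) ye ze.
rewrite negb_exists => /forallP H.
have [e0 ye0] := edge_notin y.
have ze0 : z \notin edge e0 by apply/negP => ze0; have := H e0; rewrite ze0 ye0.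
have [h _] := EF (S_pos zN) ze0.
have hc : cd y z = r z.
  rewrite /hcodeg /hdeg; apply: eq_card => e; rewrite !inE.
  case ze: (z \in edge e); rewrite ?andbF ?andbT //.
  by have := H e; rewrite ze /= negbK.
have := cd_le yz; rewrite hc h.
have := edge_size e0; move: t0; clear; nia.
Qed.

Lemma S_L1 y z e f : y != z -> y \in edge e -> z \in edge e ->
  y \in edge f -> z \in edge f -> edge e = edge f.
Proof.
move=> yz ye ze yf zf; apply/eqP; rewrite eqEsubset.
have c2 : 1 < #|edge f :&: edge e|.
  apply/card_gt1P; exists y, z; by rewrite !inE ye ze yf zf.
apply/andP; split; apply/subsetP => w we; apply/negPn/negP => wf'.
  have := S1 wf' we; rewrite setIC => h1.
  by move: c2; rewrite h1.
by have := S1 wf' we; move=> h1; move: c2; rewrite h1.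
Qed.

Lemma S_mult e : #|[set f | edge f == edge e]| = t.
Proof.
have := edge_size e; case/card_gt1P => y [z [ye ze yz]].
rewrite -(S_cd_t (subsetP (S_in e) y ye) (subsetP (S_in e) z ze) yz).
apply: eq_card => f; rewrite !inE.
apply/eqP/andP => [->|[yf zf]]; first by [].
exact: S_L1 yz yf zf ye ze.
Qed.

Lemma S_distinct_meet e f : edge e != edge f -> #|edge e :&: edge f| = 1.
Proof.
rewrite eqEsubset negb_and => /orP [] /subsetPn [w w1 w2].
  exact: S1 w2 w1.
by rewrite setIC; exact: S1 w2 w1.
Qed.

Lemma S_pinch g e a c w : a \in edge g -> c \in edge g -> c \notin edge e ->
  a \in edge e -> w \in edge g -> w \in edge e -> w = a.
Proof.
move=> ag cg ce ae wg we; apply/eqP/negPn/negP => wa.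
have := S_L1 (y := a) (z := w) (e := g) (f := e); rewrite eq_sym wa => /(_ isT ag wg ae we) hge.
by move: cg; rewrite hge (negbTE ce).
Qed.

Lemma S_common a c : a \in N v -> c \in N v -> a != c -> exists g, (a \in edge g) && (c \in edge g).
Proof.
move=> aN cN ac.
have : 0 < cd a c by rewrite (S_cd_t aN cN ac).
by rewrite /hcodeg => /card_gt0P [g]; rewrite inE => h; exists g.
Qed.

Lemma S_samesize : (forall e, #|edge e| != #|N v| - 1) ->
  forall e f, #|edge e| = #|edge f|.
Proof.
move=> HB e f.
case: (eqVneq (edge e) (edge f)) => [->//|nef].
case: (boolP [exists x, [&& x \in N v, x \notin edge e & x \notin edge f]]).
  case/existsP => x /and3P [xN xe xf].
  have [h1 _] := EF (S_pos xN) xe; have [h2 _] := EF (S_pos xN) xf.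
  by apply/eqP; rewrite -(eqn_pmul2l t0) -h1 -h2.
rewrite negb_exists => /forallP Hc.
have Nef : N v = edge e :|: edge f.
  apply/eqP; rewrite eqEsubset; apply/andP; split.
    apply/subsetP => x xN; have := Hc x; rewrite xN !inE /=.
    by case: (x \in edge e); case: (x \in edge f).
  by rewrite subUset !S_in.
have m1 := S_distinct_meet nef.
have hs : #|N v| = #|edge e| + #|edge f| - 1 by rewrite Nef cardsU m1.
have ke := edge_size e; have kf := edge_size f.
have : #|edge e| = 2 \/ #|edge f| = 2.
  case: (eqVneq #|edge e| 2) => [-> | he]; first by left.
  case: (eqVneq #|edge f| 2) => [-> | hf]; first by right.
  exfalso.
  have c1 : 1 < #|edge e :\: edge f| by rewrite cardsD m1; move: he; lia.
  have c2 : 1 < #|edge f :\: edge e| by rewrite cardsD setIC m1; move: hf; lia.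
  case/card_gt1P: c1 => a [a' []]; rewrite !inE => /andP [af ae] /andP [a'f a'e] aa'.
  case/card_gt1P: c2 => c [c' []]; rewrite !inE => /andP [ce cf] /andP [c'e c'f] cc'.
  have aN : a \in N v by rewrite Nef in_setU ae.
  have a'N : a' \in N v by rewrite Nef in_setU a'e.
  have cN : c \in N v by rewrite Nef in_setU cf orbT.
  have c'N : c' \in N v by rewrite Nef in_setU c'f orbT.
  have ac : a != c by apply: contraNneq af => ->.
  have a'c' : a' != c' by apply: contraNneq a'f => ->.
  have [g /andP [ag cg]] := S_common aN cN ac.
  have [g' /andP [a'g' c'g']] := S_common a'N c'N a'c'.
  case/set0Pn: (inter g g') => w; rewrite inE => /andP [wg wg'].
  have : w \in N v by apply: (subsetP (S_in g)).
  rewrite Nef in_setU => /orP [we|wf2].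
    have h1 := S_pinch ag cg ce ae wg we.
    have h2 := S_pinch a'g' c'g' c'e a'e wg' we.
    by move: aa'; rewrite -h1 -h2 eqxx.
  have h1 := S_pinch cg ag af cf wg wf2.
  have h2 := S_pinch c'g' a'g' a'f c'f wg' wf2.
  by move: cc'; rewrite -h1 -h2 eqxx.
case => h2.
  by exfalso; move: (HB f); rewrite hs h2 => /eqP; lia.
by exfalso; move: (HB e); rewrite hs h2 => /eqP; lia.
Qed.

Local Notation W := {x : V | x \in N v}.
Local Notation F := {L : {set V} | [exists e, edge e == L]}.

Lemma ex_psi e : [exists e', edge e' == edge e].
Proof. by apply/existsP; exists e. Qed.

Definition psi e : F := exist _ (edge e) (ex_psi e).

Definition ge (L : F) : {set W} := [set w : W | val w \in val L].

Lemma img_val (A : {set V}) : A \subset N v -> val @: [set w : W | val w \in A] = A.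
Proof.
move=> H; apply/setP => y; apply/imsetP/idP => [[w]|yA].
  by rewrite inE => wA ->.
by exists (exist _ y (subsetP H y yA)); rewrite ?inE.
Qed.

Lemma F_edge (L : F) : exists e, val L = edge e.
Proof. by case/existsP: (valP L) => e /eqP he; exists e. Qed.

Lemma card_ge L : #|ge L| = #|val L|.
Proof.
have [e he] := F_edge L.
rewrite -(card_imset _ val_inj) /ge he img_val //; exact: S_in.
Qed.

Lemma psi_eq e L : (psi e == L) = (edge e == val L).
Proof. by rewrite -val_eqE. Qed.

Lemma r_partition x : r x = t * #|[set L : F | x \in val L]|.
Proof.
rewrite hdeg_sum (partition_big psi predT) //=.
rewrite card_sum big_distrr /=; apply: eq_bigr => L _.
have [e he] := F_edge L.
have he' : sval L = edge e by exact: he.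
rewrite inE he.
case xe: (x \in edge e); last first.
  rewrite muln0 big_pred0 // => g; rewrite [X in _ && X](_ : _ = (edge g == edge e)); last first.
    by apply/eqP/eqP => [hL|h]; [rewrite -he -hL | apply: val_inj; rewrite /= h he].
  by case: eqP => [->|]; rewrite ?xe ?andbF.
rewrite muln1 -(S_mult e) sum1_card; apply: eq_card => g; rewrite !inE -topredE /= [X in _ && X](_ : _ = (edge g == edge e)); last first.
  by apply/eqP/eqP => [hL|h]; [rewrite -he -hL | apply: val_inj; rewrite /= h he].
by case: eqP => [->|]; rewrite ?xe ?andbF.
Qed.

Lemma Nv_size e0 : v \in edge e0 ->
  (forall e, #|edge e| != #|N v| - 1) ->
  let K := #|edge e0| - 1 in
  [/\ forall e, #|edge e| = K.+1, forall x, x \in N v -> r x = t * K.+1 &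
      #|N v| = K ^ 2 + K + 1].
Proof.
move=> ve0 HB K.
have hK : forall e, #|edge e| = K.+1.
  move=> e; rewrite (S_samesize HB e e0) /K subn1 prednK //; exact: ltnW (edge_size e0).
have hdg : forall x, x \in N v -> r x = t * K.+1.
  move=> x xN; have [e xe] := edge_notin x; have [-> _] := EF (S_pos xN) xe; by rewrite hK.
split => //.
have H1 : \sum_(y in [set~ v]) cd v y = t * (#|N v| - 1).
  rewrite (eq_bigr (fun y => t * (y \in N v))); last first.
    move=> y; rewrite !inE => yv.
    case yN: (y \in N v); last by rewrite muln0 cd0 ?yN.
    by rewrite muln1 S_cd_t // ?x_inN // eq_sym.
  rewrite -big_distrr /=; congr (t * _).
  have := cardsD1 v (N v); rewrite x_inN // add1n => ->.
  rewrite subn1 /= setDE card_sum big_mkcond /=.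
  apply: eq_bigr => y _; rewrite !inE; by case: (y == v); case: (y \in N v).
have H2 : \sum_(y in [set~ v]) cd v y = t * K.+1 * K.
  rewrite sum_deg_minus (eq_bigr (fun _ => K)); last by move=> g _; rewrite hK subn1.
  rewrite -(hdg v (x_inN rv)) hdeg_sum big_distrl /=; apply: eq_bigr => g _; by rewrite mul1n.
have vN : 0 < #|N v| by rewrite card_gt0; apply/set0Pn; exists v; exact: x_inN.
move: H1; rewrite H2 -mulnA => /eqP; rewrite eqn_pmul2l // => /eqP h.
rewrite -(subnK vN) -h; ring.
Qed.

Lemma tfold_quot : is_tfold_of edge (N v) t ge.
Proof.
exists val, psi; split.
- exact: val_inj.
- apply/setP => y; apply/imsetP/idP => [[w _ ->]|yN]; first exact: valP.
  by exists (exist _ y yN).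
- move=> e _; exact: img_val (S_in e).
- move=> L; have [e he] := F_edge L; rewrite -(S_mult e).
  apply: eq_card => g; rewrite !inE S_in /=.
  by apply/eqP/eqP => [hL|h]; [rewrite -he -hL | apply: val_inj; rewrite /= h he].
Qed.

Lemma PP e0 : v \in edge e0 -> (forall e, #|edge e| != #|N v| - 1) ->
  is_tfold_projective_plane edge (N v) t.
Proof.
move=> ve0 HB.
have [hK hdg hN] := Nv_size ve0 HB.
set K := #|edge e0| - 1 in hK hdg hN.
exists K, (Finite.clone {x : V | x \in N v} _), (Finite.clone F _), ge.
split; last exact: tfold_quot.
split.
- move=> L; rewrite -card_gt0 card_ge; have [e ->] := F_edge L; exact: ltnW (edge_size e).
- move=> w1 w2 w12; rewrite leqNgt; apply/negP => /card_gt1P [L1 [L2 []]].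
  rewrite !inE => /andP [h11 h12] /andP [h21 h22] L12.
  have [e1 he1] := F_edge L1; have [e2 he2] := F_edge L2.
  rewrite he1 in h11 h12; rewrite he2 in h21 h22.
  have w12' : val w1 != val w2 by rewrite val_eqE.
  have := S_L1 w12' h11 h12 h21 h22; rewrite -he1 -he2 => /val_inj h.
  by rewrite h eqxx in L12.
- move=> L1 L2; have [e1 he1] := F_edge L1; have [e2 he2] := F_edge L2.
  case/set0Pn: (inter e1 e2) => y; rewrite inE => /andP [y1 y2].
  have yN : y \in N v by apply: (subsetP (S_in e1)).
  apply/set0Pn; exists (exist _ y yN); by rewrite !inE /= he1 he2 y1.
- by rewrite card_sig; rewrite -hN; apply: eq_card => y; rewrite !inE.
- split.
    move=> L; rewrite card_ge; have [e ->] := F_edge L; exact: hK.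
  move=> w; apply/eqP; rewrite -(eqn_pmul2l t0) -(hdg (val w) (valP w)).
  rewrite r_partition; apply/eqP; congr (t * _).
  by apply: eq_card => L; rewrite !inE.
Qed.

Section NP.
Variables (e0 : E) (p x0 : V).
Hypothesis hp : N v :\: edge e0 = [set p].
Hypothesis x0e : x0 \in edge e0.

Lemma pN : p \in N v.
Proof. by have := set11 p; rewrite -hp inE => /andP []. Qed.

Lemma pL : p \notin edge e0.
Proof. by have := set11 p; rewrite -hp inE => /andP []. Qed.

Lemma inL y : y \in N v -> y != p -> y \in edge e0.
Proof.
move=> yN yp; apply/negPn/negP => yL.
have : y \in N v :\: edge e0 by rewrite inE yL yN.
by rewrite hp inE (negbTE yp).
Qed.

Lemma NP1 e : p \notin edge e -> edge e = edge e0.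
Proof.
move=> pe; have := edge_size e; case/card_gt1P => y [z [ye ze yz]].
have yL : y \in edge e0 by apply: inL; [exact: (subsetP (S_in e)) | apply: contraNneq pe => <-].
have zL : z \in edge e0 by apply: inL; [exact: (subsetP (S_in e)) | apply: contraNneq pe => <-].
exact: S_L1 yz ye ze yL zL.
Qed.

Lemma NP_other e y z : p \in edge e -> y \in edge e -> z \in edge e -> y != p -> z != p -> y = z.
Proof.
move=> pe ye ze yp zp; apply/eqP/negPn/negP => yz.
have yL := inL (subsetP (S_in e) y ye) yp.
have zL := inL (subsetP (S_in e) z ze) zp.
have := S_L1 yz ye ze yL zL => h.
by move: pL; rewrite -h pe.
Qed.

Lemma NP_ex e : p \in edge e -> exists y, (y \in edge e) && (y != p).
Proof.
move=> pe; have := edge_size e; case/card_gt1P => y [z [ye ze yz]].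
case: (eqVneq y p) => [yp|yp]; last by exists y; rewrite ye yp.
by exists z; rewrite ze -yp eq_sym yz.
Qed.

Local Notation k := #|edge e0|.

Definition phiN (o : option 'I_k) : V := if o is Some i then enum_val i else p.

Definition psiN e : option 'I_k :=
  if p \in edge e then
    (if [pick y in edge e :\ p] is Some y then Some (enum_rank_in x0e y) else None)
  else None.

Lemma enum_in (i : 'I_k) : enum_val i \in edge e0.
Proof. exact: enum_valP. Qed.

Lemma enum_neq_p (i : 'I_k) : enum_val i != p.
Proof. by apply: contraNneq pL => <-; exact: enum_in. Qed.

Lemma psiN_some e : p \in edge e -> exists2 y, y \in edge e /\ y != p & psiN e = Some (enum_rank_in x0e y).
Proof.
move=> pe; rewrite /psiN pe.
case: pickP => [y|H]; first by rewrite !inE => /andP [yp ye]; exists y.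
have [y /andP [ye yp]] := NP_ex pe.
by have := H y; rewrite !inE ye yp.
Qed.

Lemma tfold_np : is_tfold_of edge (N v) t (@near_pencil_edge k).
Proof.
exists phiN, psiN; split.
- case=> [i|] [j|] //=.
  + by move/enum_val_inj => ->.
  + by move=> h; have := enum_neq_p i; rewrite h eqxx.
  + by move=> h; have := enum_neq_p j; rewrite h eqxx.
- apply/setP => y; apply/imsetP/idP => [[o _ ->]|yN].
    case: o => [i|] /=; last exact: pN.
    exact: (subsetP (S_in e0)) (enum_in i).
  case: (eqVneq y p) => [->|yp]; first by exists None.
  exists (Some (enum_rank_in x0e y)); first by rewrite inE.
  by rewrite /= enum_rankK_in //; apply: inL.
- move=> e _.
  case: (boolP (p \in edge e)) => pe.
    have [y [ye yp] ->] := psiN_some pe.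
    rewrite /= imsetU1 imset_set1 /= enum_rankK_in; last exact: inL (subsetP (S_in e) y ye) yp.
    apply/setP => z; rewrite !inE; apply/orP/idP => [[/eqP ->|/eqP ->]//|ze].
    case: (eqVneq z p) => [->|zp]; first by left.
    by right; rewrite (NP_other pe ze ye zp yp).
  rewrite /psiN (negbTE pe) /= (NP1 pe).
  apply/setP => y; apply/imsetP/idP => [[o /imsetP [i _ ->] ->]|yL].
    exact: enum_in.
  exists (Some (enum_rank_in x0e y)); first by apply/imsetP; exists (enum_rank_in x0e y).
  by rewrite /= enum_rankK_in.
- case=> [i|].
    rewrite -(S_cd_t pN (subsetP (S_in e0) _ (enum_in i))); last by rewrite eq_sym enum_neq_p.
    apply: eq_card => e; rewrite !inE S_in /=.
    case: (boolP (p \in edge e)) => pe /=; last by rewrite /psiN (negbTE pe).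
    have [y [ye yp] ->] := psiN_some pe.
    apply/eqP/idP => [[<-]|ie].
      by rewrite enum_rankK_in //; exact: inL (subsetP (S_in e) y ye) yp.
    congr Some; rewrite (NP_other pe ye ie yp (enum_neq_p i)).
    exact: enum_valK_in.
  rewrite -(S_mult e0); apply: eq_card => e; rewrite !inE S_in /=.
  case: (boolP (p \in edge e)) => pe /=.
    have [y _ ->] := psiN_some pe.
    by apply/esym/negbTE; apply: contra pL => /eqP <-.
  by rewrite /psiN (negbTE pe) (NP1 pe) !eqxx.
Qed.

End NP.

Lemma Str_main : [/\ #|N v| = mm, (forall x, x \notin N v -> r x = 0) &
  (is_tfold_projective_plane edge (N v) t \/ is_tfold_near_pencil edge (N v) t)].
Proof.
split; [exact: S_Nm | exact: S_out |].
have := rv; rewrite /hdeg card_gt0 => /set0Pn [e0]; rewrite inE => ve0.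
case: (boolP [exists e, #|edge e| == #|N v| - 1]).
  case/existsP => e1 /eqP h1.
  have vN : 0 < #|N v| by rewrite card_gt0; apply/set0Pn; exists v; exact: x_inN.
  have : #|N v :\: edge e1| == 1.
    rewrite cardsD (setIidPr (S_in e1)) h1; apply/eqP; move: vN; lia.
  case/cards1P => p hp.
  case/set0Pn: (wf e1) => x0 x0e.
  right; exists #|edge e1|; exact: tfold_np hp x0e.
rewrite negb_exists => /forallP HB.
left; exact: PP ve0 HB.
Qed.

End Str.

Lemma final_eq : t * mm = #|E| -> 0 < #|E| -> exists v : V,
  [/\ #|E| = t * #|N v|, (forall x, x \notin N v -> r x = 0) &
      (is_tfold_projective_plane edge (N v) t \/ is_tfold_near_pencil edge (N v) t)].
Proof.
move=> hb b0; have [hr t0 EF] := eq_facts hb b0.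
have := b0; case/card_gt0P => e0 _.
case/set0Pn: (wf e0) => v ve0.
have rv := r_pos ve0.
have [h1 h2 h3] := Str_main hr t0 EF rv.
by exists v; split => //; rewrite h1 hb.
Qed.

End Hyp.

Theorem theorem1p6 (n t : nat) (V E : finType) (edge : E -> {set V}) :
  hg_wf edge -> #|V| = n -> intersecting edge -> codegree_le edge t ->
  (forall e : E, #|edge e| != 1) ->
  #|E| <= t * \max_(v : V) #|nbhd edge v| /\
  (#|E| = t * \max_(v : V) #|nbhd edge v| -> 0 < #|E| ->
   exists v : V,
     [/\ #|E| = t * #|nbhd edge v|,
         (forall x : V, x \notin nbhd edge v -> hdeg edge x = 0)
       & (is_tfold_projective_plane edge (nbhd edge v) t \/
          is_tfold_near_pencil edge (nbhd edge v) t)]).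
Proof.
move=> wf _ inter cod no1; split.
  exact: (part1 wf inter cod no1).
move=> hb b0; exact: (final_eq wf inter cod no1 (esym hb) b0).
Qed.
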